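(* Let $\sigma>0$, $\bar\gamma>0$, $c_\infty\ge0$, and for $\gamma\in(0,\bar\gamma]$ let $\tau_\gamma:[0,\infty)\to[0,\infty)$ be non-decreasing with $\tau_\gamma(0)=0$, such that there exist $R_1,L\ge0$, $m>0$ with $\sup_{r>0}\tau_\gamma(r)/r\le1+\gamma L$ and $\sup_{r>R_1}\tau_\gamma(r)/r\le1-\gamma m$ for all $\gamma\in(0,\bar\gamma]$. Let $Q_\gamma$ be the Markov kernel on $[0,\infty)$ $$Q_\gamma(w,A)=\delta_0(A)\int_{\mathbb{R}}\bar p_{\sigma^2\gamma}(\tau_\gamma(w)+\gamma c_\infty,g)\varphi(g)dg+\int_{\mathbb{R}}\mathbb{1}_A(\tau_\gamma(w)+\gamma c_\infty-2\sigma\gamma^{1/2}g)\{1-\bar p_{\sigma^2\gamma}(\tau_\gamma(w)+\gamma c_\infty,g)\}\varphi(g)dg,$$ with $\bar p_{\sigma^2\gamma}(a,g)=1\wedge\varphi_{\sigma^2\gamma}(a-\sigma\sqrt\gamma g)/\varphi_{\sigma^2\gamma}(\sigma\sqrt\gamma g)$. Let $a>0$, $\mathcal W_a^*(w)=e^{aw}-1$, and define $\tilde R_a=1\vee R_1\vee[(4a\sigma^2+2c_\infty)/m]\vee16\sigma^2a/m$, $\lambda_a=\exp(-am\tilde R_a/8)$, $C_a=a(c_\infty+2a\sigma^2)e^{a\bar\gamma(c_\infty+2a\sigma^2)}+2\sigma^2(2\pi)^{-1/2}ae^{(a+2\sigma\bar\gamma^{1/2}a)^2/2}$, $R_a=\tilde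 R_a\vee a^{-1}\log\big(1+C_a/(-\log(\lambda_a)\lambda_a^{2\bar\gamma})\big)$, $\bar\gamma_1=\bar\gamma\wedge1/(-\log\lambda_a)\wedge1/(4\sigma^2)$, $B_a=e^{a(c_\infty+2a\sigma^2+LR_a)}$, $D_a=a(c_\infty+2a\sigma^2+LR_a)e^{a\bar\gamma(c_\infty+2a\sigma^2+LR_a)}+2\sigma^2(2\pi)^{-1/2}ae^{(a+2\sigma\bar\gamma^{1/2}a)^2/2}+2\sigma^2a^2\lambda_a^{2\bar\gamma}\mathcal W_a^*(R_a)$. Then for all $w\ge0$ and $\gamma\in(0,\bar\gamma_1]$, $$Q_\gamma\mathcal W_a^*(w)\le\lambda_a^\gamma\mathcal W_a^*(w)\mathbb{1}_{[R_a,\infty)}(w)+B_a^\gamma\mathcal W_a^*(w)\mathbb{1}_{[0,R_a)}(w)+\gamma D_a\mathbb{1}_{[0,R_a)}(w).$$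
   Context: $\varphi$ is the standard normal density and $\varphi_s(t)=(2\pi s)^{-1/2}e^{-t^2/(2s)}$. *)

(* Defs.v *)
From Stdlib Require Import Reals Lra.
From Coquelicot Require Import Coquelicot.
Open Scope R_scope.

Definition phi (t : R) : R := / sqrt (2 * PI) * exp (- t ^ 2 / 2).
Definition phi_s (s t : R) : R := / sqrt (2 * PI * s) * exp (- t ^ 2 / (2 * s)).

Definition int_R (f : R -> R) : R :=
  RInt_gen f (Rbar_locally m_infty) (Rbar_locally p_infty).

Definition pbar (sigma gamma a g : R) : R :=
  Rmin 1 (phi_s (sigma ^ 2 * gamma) (a - sigma * sqrt gamma * g)
          / phi_s (sigma ^ 2 * gamma) (sigma * sqrt gamma * g)).

(* Q_gamma f (w) = \int f(y) Q_gamma(w, dy) for the kernel Q_gamma *)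
Definition Qker (sigma cinf : R) (tau : R -> R -> R) (gamma : R)
    (f : R -> R) (w : R) : R :=
  let x := tau gamma w + gamma * cinf in
  f 0 * int_R (fun g => pbar sigma gamma x g * phi g)
  + int_R (fun g => f (x - 2 * sigma * sqrt gamma * g)
                     * (1 - pbar sigma gamma x g) * phi g).

Definition Wstar (a w : R) : R := exp (a * w) - 1.

Definition indic {P : Prop} (d : {P} + {~ P}) : R := if d then 1 else 0.

Definition Rtilde (sigma cinf R1 m a : R) : R :=
  Rmax (Rmax (Rmax 1 R1) ((4 * a * sigma ^ 2 + 2 * cinf) / m))
       (16 * sigma ^ 2 * a / m).

Definition lam (sigma cinf R1 m a : R) : R :=
  exp (- a * m * Rtilde sigma cinf R1 m a / 8).

Definition Ca (sigma gbar cinf a : R) : R :=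
  a * (cinf + 2 * a * sigma ^ 2) * exp (a * gbar * (cinf + 2 * a * sigma ^ 2))
  + 2 * sigma ^ 2 * / sqrt (2 * PI) * a
      * exp ((a + 2 * sigma * sqrt gbar * a) ^ 2 / 2).

Definition Ra (sigma gbar cinf R1 m a : R) : R :=
  let l := lam sigma cinf R1 m a in
  Rmax (Rtilde sigma cinf R1 m a)
       (/ a * ln (1 + Ca sigma gbar cinf a / (- ln l * Rpower l (2 * gbar)))).

Definition gbar1 (sigma gbar cinf R1 m a : R) : R :=
  Rmin (Rmin gbar (/ (- ln (lam sigma cinf R1 m a)))) (/ (4 * sigma ^ 2)).

Definition Ba (sigma gbar cinf R1 L m a : R) : R :=
  exp (a * (cinf + 2 * a * sigma ^ 2 + L * Ra sigma gbar cinf R1 m a)).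

Definition Da (sigma gbar cinf R1 L m a : R) : R :=
  let r := Ra sigma gbar cinf R1 m a in
  a * (cinf + 2 * a * sigma ^ 2 + L * r)
      * exp (a * gbar * (cinf + 2 * a * sigma ^ 2 + L * r))
  + 2 * sigma ^ 2 * / sqrt (2 * PI) * a
      * exp ((a + 2 * sigma * sqrt gbar * a) ^ 2 / 2)
  + 2 * sigma ^ 2 * a ^ 2 * Rpower (lam sigma cinf R1 m a) (2 * gbar) * Wstar a r.

(* Main.v *)
Require Import Defs.
From Stdlib Require Import Reals Lra Classical FunctionalExtensionality.
From Coquelicot Require Import Coquelicot.
Open Scope R_scope.



Lemma cont_ex (f:R->R) a b : (forall z, Rmin a b <= z <= Rmax a b -> continuous f z) -> ex_RInt f a b.
Proof. apply (ex_RInt_continuous (V:=R_CompleteNormedModule)). Qed.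
Lemma der_cont (f:R->R) x : ex_derive f x -> continuous f x.
Proof. apply (ex_derive_continuous (K:=R_AbsRing) (V:=R_NormedModule)). Qed.

Ltac fixeq := match goal with |- ?a = ?b => change (@eq R a b) end.

Lemma RInt_scal_R (f:R->R) a b k : ex_RInt f a b -> RInt (fun t => k * f t) a b = k * RInt f a b.
Proof. intros H. exact (RInt_scal f a b k H). Qed.
Lemma RInt_lin_R (f:R->R) u v a b : ex_RInt f (u*a+v) (u*b+v) ->
  RInt (fun y => u * f (u*y+v)) a b = RInt f (u*a+v) (u*b+v).
Proof. intros H. exact (RInt_comp_lin f u v a b H). Qed.

Definition gf (t : R) := exp (-(t*t)).
Definition A (X : R) := RInt gf 0 X.
Definition Gp (x t : R) := exp (-(x*x)*(1+t*t)) / (1+t*t).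
Definition G (x : R) := RInt (fun t => Gp x t) 0 1.

Lemma gf_cont x : continuous gf x.
Proof. apply der_cont. unfold gf. auto_derive. auto. Qed.

Lemma gf_ex a b : ex_RInt gf a b.
Proof. apply cont_ex. intros; apply gf_cont. Qed.

Lemma A_der x : is_derive A x (gf x).
Proof.
  apply is_derive_RInt with (a := 0).
  - apply filter_forall. intros. apply RInt_correct, gf_ex.
  - apply gf_cont.
Qed.

Lemma onept_pos t : 0 < 1 + t*t.
Proof. nra. Qed.

Lemma Gp_ex x a b : ex_RInt (fun t => Gp x t) a b.
Proof. apply cont_ex. intros. apply der_cont. unfold Gp. auto_derive.
  pose proof (onept_pos z). lra. Qed.

Lemma Gp_der x t : is_derive (fun u => Gp u t) x (-2 * x * exp (-(x*x)*(1+t*t))).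
Proof. unfold Gp. auto_derive. pose proof (onept_pos t); lra.
  field. pose proof (onept_pos t); lra. Qed.

Lemma Gp_cont2 x t : continuity_2d_pt (fun u v => Derive (fun z => Gp z v) u) x t.
Proof.
  apply continuity_2d_pt_ext with (f := fun u v => -2 * u * exp (-(u*u)*(1+v*v))).
  { intros. symmetry. apply is_derive_unique. apply Gp_der. }
  apply continuity_2d_pt_mult.
  apply continuity_2d_pt_mult. apply continuity_2d_pt_const. apply continuity_2d_pt_id1.
  apply continuity_1d_2d_pt_comp with (f := exp).
  apply derivable_continuous_pt, derivable_pt_exp.
  apply continuity_2d_pt_mult.
  apply continuity_2d_pt_opp. apply continuity_2d_pt_mult; apply continuity_2d_pt_id1.
  apply continuity_2d_pt_plus. apply continuity_2d_pt_const.
  apply continuity_2d_pt_mult; apply continuity_2d_pt_id2.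
Qed.

Lemma G_der x : is_derive G x (-2 * gf x * A x).
Proof.
  unfold G.

  assert (H : is_derive (fun x0 => RInt (fun t => Gp x0 t) 0 1) x
          (RInt (fun t => Derive (fun u => Gp u t) x) 0 1)).
  { apply is_derive_RInt_param.
    - apply filter_forall. intros. eexists; apply Gp_der.
    - intros. apply Gp_cont2.
    - apply filter_forall. intros. apply Gp_ex. }
  replace (-2 * gf x * A x) with (RInt (fun t => Derive (fun u => Gp u t) x) 0 1). exact H.
  rewrite (RInt_ext _ (fun t => (-2 * gf x) * (x * gf (x*t+0)))).
  2:{ intros t _. match goal with |- ?a = ?b => change (@eq R a b) end. rewrite (is_derive_unique (fun u:R => Gp u t) x _ (Gp_der x t)). unfold gf.
      rewrite Rplus_0_r. replace (-(x*x)*(1+t*t)) with (-(x*x) + -(x*t*(x*t))) by ring. rewrite exp_plus. ring. }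
  rewrite RInt_scal_R.
  2:{ apply cont_ex. intros. apply der_cont. unfold gf. auto_derive. auto. }
  rewrite RInt_lin_R by apply gf_ex.
  unfold A. f_equal. f_equal; ring.
Qed.

Lemma h_der x : is_derive (fun x => A x * A x + G x) x 0.
Proof.
  pose proof (is_derive_mult A A x _ _ (A_der x) (A_der x) Rmult_comm) as H1.
  pose proof (is_derive_plus _ _ x _ _ H1 (G_der x)) as H2.
  assert (E: plus (plus (mult (gf x) (A x)) (mult (A x) (gf x))) (-2 * gf x * A x) = 0)
    by (unfold plus, mult; simpl; ring).
  rewrite <- E. exact H2.
Qed.

Lemma G0 : G 0 = PI / 4.
Proof.
  unfold G. rewrite (RInt_ext _ (fun t => / (1 + t²))).
  2:{ intros t _. fixeq. unfold Gp, Rsqr. replace (-(0*0)*(1+t*t)) with 0 by ring. rewrite exp_0. field. pose proof (onept_pos t); lra. }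
  rewrite (is_RInt_unique _ 0 1 (minus (atan 1) (atan 0))).
  - rewrite atan_1, atan_0. unfold minus, plus, opp; simpl. ring.
  - apply (is_RInt_derive (V:=R_CompleteNormedModule)).
    + intros; apply is_derive_atan.
    + intros. apply der_cont. auto_derive. pose proof (onept_pos x). unfold Rsqr. lra.
Qed.

Lemma h_const X : A X * A X + G X = PI / 4.
Proof.
  assert (H : is_RInt (V:=R_CompleteNormedModule) (fun _ => 0) 0 X
     (minus (A X * A X + G X) (A 0 * A 0 + G 0))).
  { apply (is_RInt_derive (V:=R_CompleteNormedModule) (fun x => A x * A x + G x)).
    + intros; apply h_der.
    + intros; apply continuous_const. }
  pose proof (is_RInt_const (V:=R_NormedModule) 0 X 0) as H0.
  pose proof (filterlim_locally_unique _ _ _ H H0) as E.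
  unfold minus, plus, opp, scal in E; simpl in E; unfold mult in E; simpl in E.
  assert (A0 : A 0 = 0) by (unfold A; exact (RInt_point (V:=R_CompleteNormedModule) 0 gf)).
  rewrite A0, G0 in E. lra.
Qed.

Lemma G_nonneg X : 0 <= G X.
Proof.
  unfold G. apply RInt_ge_0. lra. apply Gp_ex.
  intros t _. unfold Gp. apply Rlt_le, Rdiv_lt_0_compat. apply exp_pos. apply onept_pos.
Qed.

Lemma A_bound X : 0 <= X -> A X <= sqrt PI / 2.
Proof.
  intros HX.
  assert (HA : 0 <= A X).
  { unfold A. apply RInt_ge_0; auto. apply gf_ex. intros; unfold gf; apply Rlt_le, exp_pos. }
  pose proof (h_const X). pose proof (G_nonneg X).
  assert (A X * A X <= PI / 4) by lra.
  rewrite <- (sqrt_square (A X)) by exact HA.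
  replace (sqrt PI / 2) with (sqrt (PI / 4)).
  apply sqrt_le_1_alt. exact H1.
  rewrite sqrt_div_alt by lra. replace 4 with (2*2) by ring. rewrite sqrt_square by lra. reflexivity.
Qed.

Lemma gf_even y : gf (-y) = gf y.
Proof. unfold gf. f_equal. ring. Qed.

Lemma sym_int Y : 0 <= Y -> RInt gf (-Y) Y <= sqrt PI.
Proof.
  intros HY.
  rewrite <- (RInt_Chasles (V:=R_CompleteNormedModule) gf (-Y) 0 Y) by apply gf_ex.
  assert (E : RInt gf 0 (-Y) = - A Y).
  { pose proof (RInt_lin_R gf (-1) 0 0 Y) as H.
    replace (-1*0+0) with 0 in H by ring. replace (-1*Y+0) with (-Y) in H by ring.
    rewrite <- H by apply gf_ex.
    rewrite (RInt_ext _ (fun y => -1 * gf y)).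
    2:{ intros; fixeq. f_equal. rewrite <- gf_even. f_equal. ring. }
    rewrite RInt_scal_R by apply gf_ex. unfold A. fixeq. ring. }
  assert (E2 : RInt gf (-Y) 0 = A Y).
  { rewrite <- (opp_RInt_swap (V:=R_CompleteNormedModule)) by apply gf_ex.
    change (- RInt gf 0 (-Y) = A Y). rewrite E. ring. }
  change (RInt gf (-Y) 0 + RInt gf 0 Y <= sqrt PI). rewrite E2.
  pose proof (A_bound Y HY). unfold A in *. lra.
Qed.

Lemma phi_pos t : 0 < phi t.
Proof. unfold phi. apply Rmult_lt_0_compat. apply Rinv_0_lt_compat, sqrt_lt_R0.
  pose proof PI_RGT_0; lra. apply exp_pos. Qed.

Lemma phi_cont t : continuous phi t.
Proof. apply der_cont. unfold phi. auto_derive. auto. Qed.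

Lemma phi_ex a b : ex_RInt phi a b.
Proof. apply cont_ex. intros; apply phi_cont. Qed.

Lemma phi_sym X : 0 <= X -> RInt phi (-X) X <= 1.
Proof.
  intros HX.
  set (k := / sqrt 2).
  assert (Hs2 : 0 < sqrt 2) by (apply sqrt_lt_R0; lra).
  assert (Hk : 0 < k) by (apply Rinv_0_lt_compat; lra).
  assert (Hpi : 0 < PI) by apply PI_RGT_0.
  rewrite (RInt_ext _ (fun t => (/ sqrt (2*PI) * sqrt 2) * (k * gf (k * t + 0)))).
  2:{ intros; fixeq. unfold phi, gf, k. rewrite Rplus_0_r.
      replace (- (/ sqrt 2 * x * (/ sqrt 2 * x))) with (- x ^ 2 / 2).
      field. split; [lra|]. apply Rgt_not_eq, sqrt_lt_R0; lra.
      replace (/ sqrt 2 * x * (/ sqrt 2 * x)) with (x*x / (sqrt 2 * sqrt 2)) by (field; lra).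
      rewrite sqrt_sqrt by lra. field. }
  rewrite RInt_scal_R.
  2:{ apply cont_ex; intros. apply der_cont. unfold gf. auto_derive. auto. }
  rewrite RInt_lin_R by apply gf_ex.
  replace (k * - X + 0) with (- (k*X)) by ring. replace (k*X+0) with (k*X) by ring.
  assert (HkX : 0 <= k * X) by nra.
  pose proof (sym_int _ HkX).
  rewrite sqrt_mult_alt by lra.
  assert (Hsp : 0 < sqrt PI) by (apply sqrt_lt_R0; lra).
  replace (/ (sqrt 2 * sqrt PI) * sqrt 2) with (/ sqrt PI) by (field; lra).
  apply Rmult_le_reg_l with (sqrt PI). lra.
  rewrite <- Rmult_assoc, Rinv_r by lra. lra.
Qed.

Lemma phi_le1 c d : c <= d -> RInt phi c d <= 1.
Proof.
  intros Hcd.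
  set (X := Rabs c + Rabs d).
  assert (Hc : -X <= c) by (unfold X; pose proof (Rabs_pos d); pose proof (Rle_abs (-c)); rewrite Rabs_Ropp in *; lra).
  assert (Hd : d <= X) by (unfold X; pose proof (Rabs_pos c); pose proof (Rle_abs d); lra).
  assert (RInt phi (-X) c >= 0).
  { apply Rle_ge, RInt_ge_0; auto. apply phi_ex. intros; apply Rlt_le, phi_pos. }
  assert (RInt phi d X >= 0).
  { apply Rle_ge, RInt_ge_0; auto. apply phi_ex. intros; apply Rlt_le, phi_pos. }
  pose proof (phi_sym X ltac:(lra)).
  rewrite <- (RInt_Chasles (V:=R_CompleteNormedModule) phi (-X) c X) in H1 by apply phi_ex.
  rewrite <- (RInt_Chasles (V:=R_CompleteNormedModule) phi c d X) in H1 by apply phi_ex.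
  change (RInt phi (-X) c + (RInt phi c d + RInt phi d X) <= 1) in H1. lra.
Qed.


Lemma cont_ex' (f:R->R) a b : (forall z, continuous f z) -> ex_RInt f a b.
Proof. intros H. apply (ex_RInt_continuous (V:=R_CompleteNormedModule)). intros; apply H. Qed.

Lemma RInt_mono_int (f:R->R) a c d b : (forall t, continuous f t) -> (forall t, 0 <= f t) ->
  a <= c -> c <= d -> d <= b -> RInt f c d <= RInt f a b.
Proof.
  intros Hc Hp H1 H2 H3.
  rewrite <- (RInt_Chasles (V:=R_CompleteNormedModule) f a c b) by apply cont_ex', Hc.
  rewrite <- (RInt_Chasles (V:=R_CompleteNormedModule) f c d b) by apply cont_ex', Hc.
  change (RInt f c d <= RInt f a c + (RInt f c d + RInt f d b)).
  assert (0 <= RInt f a c) by (apply RInt_ge_0; [lra|apply cont_ex', Hc| intros; apply Hp]).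
  assert (0 <= RInt f d b) by (apply RInt_ge_0; [lra|apply cont_ex', Hc| intros; apply Hp]).
  lra.
Qed.

Lemma gen_bound (f : R -> R) V : (forall t, continuous f t) -> (forall t, 0 <= f t) ->
  (forall c d, c <= d -> RInt f c d <= V) -> int_R f <= V.
Proof.
  intros Hc Hp Hb.
  set (E := fun r => exists c d, c <= d /\ r = RInt f c d).
  assert (HEb : bound E).
  { exists V. intros r [c [d [Hcd ->]]]. apply Hb; auto. }
  assert (HEn : exists r, E r).
  { exists (RInt f 0 0). exists 0, 0. split; auto; lra. }
  destruct (completeness E HEb HEn) as [S [HS1 HS2]].
  assert (HSV : S <= V).
  { apply HS2. intros r [c [d [Hcd ->]]]. apply Hb; auto. }
  assert (Hg : is_RInt_gen f (Rbar_locally m_infty) (Rbar_locally p_infty) S).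
  { intros P [eps HP].
    assert (Hex : exists c d, c <= d /\ S - eps < RInt f c d).
    { apply NNPP. intros Hn.
      assert (S <= S - eps).
      { apply HS2. intros r [c [d [Hcd ->]]].
        apply Rnot_lt_le. intros Hlt. apply Hn. exists c, d. auto. }
      pose proof (cond_pos eps). lra. }
    destruct Hex as [c0 [d0 [Hcd0 Hlt]]].
    apply Filter_prod with (Q := fun a => a < c0) (R := fun b => d0 < b).
    - exists c0. auto.
    - exists d0. auto.
    - intros a b Ha Hb'. simpl. exists (RInt f a b). split.
      + apply (RInt_correct (V:=R_CompleteNormedModule)). apply cont_ex', Hc.
      + apply HP. assert (RInt f c0 d0 <= RInt f a b) by (apply RInt_mono_int; auto; lra).
        assert (RInt f a b <= S) by (apply HS1; exists a, b; split; auto; lra).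
        change (Rabs (RInt f a b - S) < eps). rewrite Rabs_left1 by lra. lra. }
  unfold int_R. rewrite (is_RInt_gen_unique _ _ Hg). exact HSV.
Qed.


Lemma one_minus_min r : 1 - Rmin 1 r = Rmax 0 (1 - r).
Proof. unfold Rmin, Rmax. destruct (Rle_dec 1 r); destruct (Rle_dec 0 (1 - r)); lra. Qed.

Lemma pbar_form sg gm x g : 0 < sg -> 0 < gm ->
  1 - pbar sg gm x g =
  Rmax 0 (1 - exp (-(x*(x-2*(sg*sqrt gm)*g))/(2*((sg*sqrt gm)*(sg*sqrt gm))))).
Proof.
  intros Hs Hg. unfold pbar. rewrite one_minus_min. f_equal. f_equal.
  set (b := sg * sqrt gm).
  assert (Hb : 0 < b) by (apply Rmult_lt_0_compat; [lra| apply sqrt_lt_R0; lra]).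
  assert (Hbb : sg^2*gm = b*b).
  { unfold b. replace (sg * sqrt gm * (sg * sqrt gm)) with (sg*sg*(sqrt gm * sqrt gm)) by ring.
    rewrite sqrt_sqrt by lra. ring. }
  unfold phi_s. rewrite Hbb.
  assert (Hc : 0 < sqrt (2*PI*(b*b))).
  { apply sqrt_lt_R0. pose proof PI_RGT_0. apply Rmult_lt_0_compat; nra. }
  fold b.
  replace (/ sqrt (2 * PI * (b * b)) * exp (- (x - b * g) ^ 2 / (2 * (b * b))) /
     (/ sqrt (2 * PI * (b * b)) * exp (- (b * g) ^ 2 / (2 * (b * b)))))
   with (exp (- (x - b * g) ^ 2 / (2 * (b * b))) * exp (- (- (b * g) ^ 2 / (2 * (b * b))))).
  2:{ rewrite exp_Ropp. field. pose proof (exp_pos (- (b * g) ^ 2 / (2 * (b * b)))). split; apply Rgt_not_eq; lra. }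
  rewrite <- exp_plus. f_equal. field. lra.
Qed.

Lemma exp_le a b : a <= b -> exp a <= exp b.
Proof. intros [H|H]. apply Rlt_le, exp_increasing; auto. subst; lra. Qed.

Lemma exp_ge1 u : 1 + u <= exp u.
Proof. destruct (Req_dec u 0) as [->|H]. rewrite exp_0; lra. apply Rlt_le, exp_ineq1; auto. Qed.

Lemma e_sum u : 2 <= exp u + exp (-u).
Proof. pose proof (exp_ge1 u). pose proof (exp_ge1 (-u)). lra. Qed.



Definition Eb b x g := exp (-(x*(x-2*b*g))/(2*(b*b))).
Definition fb b al x g := (exp (al*(x-2*b*g)) - 1) * Rmax 0 (1 - Eb b x g) * phi g.
Definition Fb b al x g := (exp (al*(x-2*b*g)) - 1) * phi g.
Definition Hb b al x g := fb b al x g - Fb b al x g.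

Lemma Eb_phi b x g : 0 < b -> Eb b x g * phi g = phi (x/b - g).
Proof.
  intros Hb. unfold Eb, phi.
  replace (exp (- (x * (x - 2 * b * g)) / (2 * (b * b))) * (/ sqrt (2 * PI) * exp (- g ^ 2 / 2)))
    with (/ sqrt (2 * PI) * (exp (- (x * (x - 2 * b * g)) / (2 * (b * b))) * exp (- g ^ 2 / 2))) by ring.
  rewrite <- exp_plus. f_equal. f_equal. field. lra.
Qed.

Lemma Eb_expo b x g : 0 < b -> Eb b x g = exp (- ((x*(x-2*b*g)) / (2*(b*b)))).
Proof. intros Hb. unfold Eb. f_equal. field. lra. Qed.

Lemma Eb_le1 b x g : 0 < b -> 0 <= x -> 0 <= x - 2*b*g -> Eb b x g <= 1.
Proof.
  intros Hb Hx Hy. rewrite Eb_expo by auto. rewrite <- exp_0. apply exp_le.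
  assert (0 <= x*(x-2*b*g) / (2*(b*b))).
  { unfold Rdiv; apply Rmult_le_pos; [nra| left; apply Rinv_0_lt_compat; nra]. }
  lra.
Qed.

Lemma Eb_ge1 b x g : 0 < b -> 0 <= x -> x - 2*b*g <= 0 -> 1 <= Eb b x g.
Proof.
  intros Hb Hx Hy. rewrite Eb_expo by auto. rewrite <- exp_0. apply exp_le.
  assert (x*(x-2*b*g) / (2*(b*b)) <= 0).
  { unfold Rdiv. rewrite <- (Rmult_0_l (/ (2*(b*b)))). apply Rmult_le_compat_r; [left; apply Rinv_0_lt_compat; nra| nra]. }
  lra.
Qed.

Lemma fb_nonneg b al x g : 0 < b -> 0 < al -> 0 <= x -> 0 <= fb b al x g.
Proof.
  intros Hb Ha Hx. unfold fb. pose proof (phi_pos g).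
  destruct (Rle_dec (x - 2*b*g) 0) as [Hy|Hy].
  - pose proof (Eb_ge1 b x g Hb Hx Hy). rewrite Rmax_left by lra. lra.
  - assert (1 <= exp (al * (x - 2*b*g))) by (pose proof (exp_ge1 (al * (x - 2*b*g))); nra).
    apply Rmult_le_pos; [apply Rmult_le_pos; [lra| apply Rmax_l]| lra].
Qed.

Lemma Hsym b al x g : 0 < b -> 0 < al -> 0 <= x -> Hb b al x g + Hb b al x (x/b - g) <= 0.
Proof.
  intros Hb0 Ha Hx. unfold Hb, fb, Fb.
  set (g' := x/b - g).
  assert (Hy' : x - 2*b*g' = -(x - 2*b*g)) by (unfold g'; field; lra).
  assert (HE : Eb b x g * phi g = phi g') by (apply Eb_phi; auto).
  assert (HE' : Eb b x g' * phi g' = phi g).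
  { rewrite Eb_phi by auto. f_equal. unfold g'. field. lra. }
  rewrite Hy'.
  set (Y := x - 2*b*g). fold Y in Hy', HE.
  pose proof (phi_pos g). pose proof (phi_pos g').
  pose proof (e_sum (al*Y)).
  replace (al * - Y) with (- (al*Y)) by ring.
  destruct (Rtotal_order Y 0) as [HY|[HY|HY]].
  -
    assert (1 <= Eb b x g) by (apply Eb_ge1; auto; unfold Y in HY; lra).
    assert (Eb b x g' <= 1) by (apply Eb_le1; auto; rewrite Hy'; lra).
    rewrite (Rmax_left 0 (1 - Eb b x g)) by lra.
    rewrite (Rmax_right 0 (1 - Eb b x g')) by lra.
    replace ((exp (- (al * Y)) - 1) * (1 - Eb b x g') * phi g')
      with ((exp (- (al * Y)) - 1) * (phi g' - Eb b x g' * phi g')) by ring.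
    rewrite HE'. nra.
  - rewrite HY. replace (al*0) with 0 by ring. replace (-0) with 0 by ring. rewrite exp_0. lra.
  - assert (Eb b x g <= 1) by (apply Eb_le1; auto; unfold Y in HY; lra).
    assert (1 <= Eb b x g') by (apply Eb_ge1; auto; rewrite Hy'; lra).
    rewrite (Rmax_right 0 (1 - Eb b x g)) by lra.
    rewrite (Rmax_left 0 (1 - Eb b x g')) by lra.
    replace ((exp (al * Y) - 1) * (1 - Eb b x g) * phi g)
      with ((exp (al * Y) - 1) * (phi g - Eb b x g * phi g)) by ring.
    rewrite HE. nra.
Qed.


Lemma c_mul (f g : R -> R) t : continuous f t -> continuous g t -> continuous (fun t => f t * g t) t.
Proof. intros; apply (continuous_mult (K:=R_AbsRing) f g t); auto. Qed.
Lemma c_plus (f g : R -> R) t : continuous f t -> continuous g t -> continuous (fun t => f t + g t) t.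
Proof. intros; apply (continuous_plus (V:=R_NormedModule) f g t); auto. Qed.
Lemma c_minus (f g : R -> R) t : continuous f t -> continuous g t -> continuous (fun t => f t - g t) t.
Proof. intros; apply (continuous_minus (V:=R_NormedModule) f g t); auto. Qed.

Lemma rmax0_cont (h:R->R) t : continuous h t -> continuous (fun t => Rmax 0 (h t)) t.
Proof.
  intros H.
  apply continuous_ext with (f := fun t => (h t + Rabs (h t)) * / 2).
  { intros u. change (@eq R ((h u + Rabs (h u)) * / 2) (Rmax 0 (h u))). unfold Rmax. destruct (Rle_dec 0 (h u)).
    rewrite Rabs_right by lra. field. rewrite Rabs_left by lra. field. }
  apply c_mul. apply c_plus. auto. apply continuous_Rabs_comp. auto. apply continuous_const.
Qed.

Lemma fb_cont b al x g : 0 < b -> continuous (fb b al x) g.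
Proof.
  intros Hb. unfold fb. apply c_mul. apply c_mul.
  apply der_cont; auto_derive; auto.
  apply rmax0_cont. apply der_cont. unfold Eb. auto_derive. lra.
  apply der_cont. unfold phi. auto_derive. auto.
Qed.

Lemma Fb_cont b al x g : continuous (Fb b al x) g.
Proof. apply der_cont. unfold Fb, phi. auto_derive. auto. Qed.

Lemma Hb_cont b al x g : 0 < b -> continuous (Hb b al x) g.
Proof. intros. unfold Hb. apply c_minus. apply fb_cont; auto. apply Fb_cont. Qed.


Lemma shift_id b al x g : exp (al*(x-2*b*g)) * phi g =
   exp (al*x + 2*al*al*(b*b)) * phi (1*g + 2*al*b).
Proof.
  unfold phi.
  replace (exp (al * (x - 2 * b * g)) * (/ sqrt (2 * PI) * exp (- g ^ 2 / 2)))
    with (/ sqrt (2 * PI) * (exp (al * (x - 2 * b * g)) * exp (- g ^ 2 / 2))) by ring.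
  replace (exp (al * x + 2 * al * al * (b * b)) * (/ sqrt (2 * PI) * exp (- (1 * g + 2 * al * b) ^ 2 / 2)))
    with (/ sqrt (2 * PI) * (exp (al * x + 2 * al * al * (b * b)) * exp (- (1 * g + 2 * al * b) ^ 2 / 2))) by ring.
  rewrite <- !exp_plus. f_equal. f_equal. field.
Qed.

Lemma exp_neg_le u : 0 <= u -> exp (-u) <= / (1 + u).
Proof.
  intros Hu. rewrite exp_Ropp. apply Rinv_le_contravar. lra. apply exp_ge1.
Qed.

Lemma phi_tail t : 2 <= t -> phi t <= / (1 + t).
Proof.
  intros Ht. unfold phi.
  assert (H1 : 1 <= sqrt (2*PI)).
  { rewrite <- sqrt_1. apply sqrt_le_1_alt. pose proof PI_RGT_0. pose proof PI2_1. lra. }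
  assert (H2 : / sqrt (2*PI) <= 1).
  { rewrite <- Rinv_1. apply Rinv_le_contravar; lra. }
  assert (H3 : exp (- t ^ 2 / 2) <= / (1 + t)).
  { replace (- t^2/2) with (-(t^2/2)) by field.
    eapply Rle_trans. apply exp_neg_le. nra.
    apply Rinv_le_contravar; nra. }
  pose proof (exp_pos (- t ^ 2 / 2)).
  assert (0 < / (1+t)) by (apply Rinv_0_lt_compat; lra).
  nra.
Qed.

Lemma phi_ex' a b : ex_RInt phi a b.
Proof. apply phi_ex. Qed.

Lemma Hb_int_le0 b al x P Q : 0 < b -> 0 < al -> 0 <= x -> P <= Q -> P + Q = x / b ->
  RInt (Hb b al x) P Q <= 0.
Proof.
  intros Hb0 Ha Hx HPQ Hsum.
  assert (Hex : forall u v, ex_RInt (Hb b al x) u v) by (intros; apply cont_ex'; intros; apply Hb_cont; auto).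
  assert (E1 : RInt (fun y => -1 * Hb b al x (-1 * y + x/b)) P Q = RInt (Hb b al x) (-1*P + x/b) (-1*Q + x/b))
    by (apply RInt_lin_R; apply Hex).
  replace (-1*P + x/b) with Q in E1 by lra. replace (-1*Q + x/b) with P in E1 by lra.
  rewrite <- (opp_RInt_swap (V:=R_CompleteNormedModule) (Hb b al x) P Q (Hex P Q)) in E1.
  assert (Hexr : ex_RInt (fun y => Hb b al x (-1 * y + x/b)) P Q).
  { apply cont_ex'. intros. apply (continuous_comp (fun y => -1*y + x/b) (Hb b al x)).
    apply der_cont; auto_derive; auto. apply Hb_cont; auto. }
  rewrite RInt_scal_R in E1 by apply Hexr.
  change (-1 * RInt (fun y => Hb b al x (-1 * y + x / b)) P Q = - RInt (Hb b al x) P Q) in E1.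
  assert (E2 : RInt (fun y => Hb b al x y + Hb b al x (-1 * y + x/b)) P Q =
              RInt (Hb b al x) P Q + RInt (fun y => Hb b al x (-1 * y + x / b)) P Q).
  { exact (RInt_plus (V:=R_CompleteNormedModule) _ _ P Q (Hex P Q) Hexr). }
  assert (E3 : RInt (fun y => Hb b al x y + Hb b al x (-1 * y + x/b)) P Q <= 0).
  { assert (Hex3 : ex_RInt (fun y => Hb b al x y + Hb b al x (-1 * y + x/b)) P Q).
    { apply (ex_RInt_plus (V:=R_CompleteNormedModule)); auto. }
    assert (0 <= RInt (fun y => -1 * (Hb b al x y + Hb b al x (-1 * y + x/b))) P Q).
    { apply RInt_ge_0; auto.
      - apply (ex_RInt_scal (V:=R_CompleteNormedModule)) with (k := -1) in Hex3. exact Hex3.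
      - intros y _. replace (-1*y + x/b) with (x/b - y) by ring. pose proof (Hsym b al x y Hb0 Ha Hx). lra. }
    rewrite RInt_scal_R in H by exact Hex3. lra. }
  lra.
Qed.

Lemma Fb_int b al x P Q : RInt (Fb b al x) P Q =
  exp (al*x + 2*al*al*(b*b)) * RInt phi (1*P + 2*al*b) (1*Q + 2*al*b) - RInt phi P Q.
Proof.
  set (K := al*x + 2*al*al*(b*b)).
  rewrite (RInt_ext _ (fun g => exp K * (1 * phi (1*g + 2*al*b)) + (-1) * phi g)).
  2:{ intros g _. fixeq. unfold Fb. rewrite Rmult_minus_distr_r, shift_id. unfold K. ring. }
  assert (Hs : ex_RInt (fun g => 1 * phi (1*g + 2*al*b)) P Q).
  { apply cont_ex'. intros. apply c_mul. apply continuous_const.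
    apply (continuous_comp (fun g => 1*g + 2*al*b) phi). apply der_cont; auto_derive; auto. apply phi_cont. }
  rewrite (RInt_plus (V:=R_CompleteNormedModule) (fun g => exp K * (1 * phi (1*g + 2*al*b))) (fun g => -1 * phi g)).
  2:{ apply (ex_RInt_scal (V:=R_CompleteNormedModule)) with (k := exp K) in Hs. exact Hs. }
  2:{ apply cont_ex'. intros. apply c_mul. apply continuous_const. apply phi_cont. }
  change (RInt (fun g => exp K * (1 * phi (1*g + 2*al*b))) P Q + RInt (fun g => -1 * phi g) P Q =
    exp K * RInt phi (1*P + 2*al*b) (1*Q + 2*al*b) - RInt phi P Q).
  rewrite RInt_scal_R by exact Hs.
  rewrite (RInt_scal_R phi P Q (-1)) by apply phi_ex.
  rewrite RInt_lin_R by apply phi_ex. ring.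
Qed.

Lemma fin_bound b al x c d eps : 0 < b -> 0 < al -> 0 <= x -> c <= d -> 0 < eps ->
  RInt (fb b al x) c d <= exp (al*x + 2*al*al*(b*b)) - 1 + eps.
Proof.
  intros Hb0 Ha Hx Hcd Heps.
  set (K := al*x + 2*al*al*(b*b)).
  set (dl := 2*al*b).
  set (g0 := x/(2*b)).
  assert (HK : 1 <= exp K).
  { pose proof (exp_ge1 K). assert (0 <= K) by (unfold K; assert (0 <= al*x) by nra; nra). lra. }
  assert (Hdl : 0 < dl) by (unfold dl; nra).
  set (M := Rabs c + Rabs d + Rabs g0 + 2 + dl * exp K / eps).
  assert (HdM : 0 <= dl * exp K / eps).
  { unfold Rdiv. apply Rmult_le_pos. nra. left; apply Rinv_0_lt_compat; auto. }
  pose proof (Rle_abs c). pose proof (Rle_abs (-c)). rewrite Rabs_Ropp in H0.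
  pose proof (Rle_abs d). pose proof (Rle_abs (-d)). rewrite Rabs_Ropp in H2.
  pose proof (Rle_abs g0). pose proof (Rle_abs (-g0)). rewrite Rabs_Ropp in H4.
  pose proof (Rabs_pos c). pose proof (Rabs_pos d). pose proof (Rabs_pos g0).
  set (P := g0 - M). set (Q := g0 + M).
  assert (HP : P <= c) by (unfold P, M; lra).
  assert (HQ : d <= Q) by (unfold Q, M; lra).
  assert (HQ2 : 2 <= Q) by (unfold Q, M; lra).
  assert (HQe : dl * exp K / eps <= Q) by (unfold Q, M; lra).
  assert (HPQ : P <= Q) by lra.
  assert (S1 : RInt (fb b al x) c d <= RInt (fb b al x) P Q).
  { apply RInt_mono_int; auto. intros; apply fb_cont; auto. intros; apply fb_nonneg; auto. }
  assert (S2 : RInt (fb b al x) P Q = RInt (Fb b al x) P Q + RInt (Hb b al x) P Q).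
  { rewrite <- (RInt_plus (V:=R_CompleteNormedModule)).
    - apply RInt_ext. intros; fixeq. unfold Hb, plus; simpl. ring.
    - apply cont_ex'; intros; apply Fb_cont.
    - apply cont_ex'; intros; apply Hb_cont; auto. }
  assert (S3 : RInt (Hb b al x) P Q <= 0).
  { apply Hb_int_le0; auto. unfold P, Q, g0. field. lra. }
  rewrite Fb_int in S2. fold K in S2.
  replace (1*P + 2*al*b) with (P + dl) in S2 by (unfold dl; ring).
  replace (1*Q + 2*al*b) with (Q + dl) in S2 by (unfold dl; ring).
  assert (C1 : RInt phi (P + dl) (Q + dl) = RInt phi (P+dl) Q + RInt phi Q (Q+dl)).
  { symmetry. exact (RInt_Chasles (V:=R_CompleteNormedModule) phi _ _ _ (phi_ex _ _) (phi_ex _ _)). }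
  assert (C2 : RInt phi P Q = RInt phi P (P+dl) + RInt phi (P+dl) Q).
  { symmetry. exact (RInt_Chasles (V:=R_CompleteNormedModule) phi _ _ _ (phi_ex _ _) (phi_ex _ _)). }
  assert (C3 : 0 <= RInt phi P (P+dl)).
  { apply RInt_ge_0. lra. apply phi_ex. intros; apply Rlt_le, phi_pos. }
  assert (C4 : RInt phi Q (Q+dl) <= dl * / (1 + Q)).
  { eapply Rle_trans. apply (RInt_le phi (fun _ => / (1+Q))). lra. apply phi_ex.
    apply cont_ex'; intros; apply continuous_const.
    intros t Ht. eapply Rle_trans. apply phi_tail. lra. apply Rinv_le_contravar; lra.
    rewrite RInt_const. unfold scal; simpl; unfold mult; simpl. right; ring. }
  assert (C5 : RInt phi P Q <= 1) by (apply phi_le1; lra).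
  assert (C6 : 0 <= RInt phi P Q) by (apply RInt_ge_0; [lra|apply phi_ex|intros; apply Rlt_le, phi_pos]).
  assert (C7 : exp K * (dl * / (1 + Q)) <= eps).
  { assert (dl * exp K <= eps * (1+Q)).
    { apply Rmult_le_reg_r with (/ eps). apply Rinv_0_lt_compat; auto.
      replace (eps * (1 + Q) * / eps) with (1 + Q) by (field; lra). unfold Rdiv in HQe. lra. }
    apply Rmult_le_reg_r with (1 + Q). lra.
    replace (exp K * (dl * / (1 + Q)) * (1 + Q)) with (dl * exp K) by (field; lra). lra. }
  set (J := RInt phi P Q) in *.
  set (T := RInt phi Q (Q+dl)) in *.
  assert (exp K * RInt phi (P + dl) (Q + dl) <= exp K * (J + T)).
  { apply Rmult_le_compat_l. lra. lra. }
  assert (exp K * T <= exp K * (dl * / (1+Q))) by (apply Rmult_le_compat_l; lra).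
  assert ((exp K - 1) * J <= exp K - 1) by (rewrite <- (Rmult_1_r (exp K - 1)) at 2; apply Rmult_le_compat_l; lra).
  lra.
Qed.


Lemma key sg gm al x : 0 < sg -> 0 < gm -> 0 < al -> 0 <= x ->
  int_R (fun g => Wstar al (x - 2*sg*sqrt gm*g) * (1 - pbar sg gm x g) * phi g)
  <= exp (al*x + 2*al*al*(sg^2*gm)) - 1.
Proof.
  intros Hs Hg Ha Hx.
  set (b := sg * sqrt gm).
  assert (Hb : 0 < b) by (apply Rmult_lt_0_compat; [lra| apply sqrt_lt_R0; lra]).
  assert (Hbb : sg^2*gm = b*b).
  { unfold b. replace (sg * sqrt gm * (sg * sqrt gm)) with (sg*sg*(sqrt gm * sqrt gm)) by ring.
    rewrite sqrt_sqrt by lra. ring. }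
  rewrite Hbb.
  replace (fun g => Wstar al (x - 2*sg*sqrt gm*g) * (1 - pbar sg gm x g) * phi g) with (fb b al x).
  2:{ apply functional_extensionality. intros g. unfold fb, Wstar, Eb.
      rewrite pbar_form by auto. fold b. replace (x - 2*sg*sqrt gm*g) with (x - 2*b*g) by (unfold b; ring).
      reflexivity. }
  apply gen_bound.
  - intros; apply fb_cont; auto.
  - intros; apply fb_nonneg; auto.
  - intros c d Hcd. apply le_epsilon. intros eps Heps. apply fin_bound; auto.
Qed.


Lemma tau_lim (tau : R -> R) w q :
  (forall r, w < r -> tau w <= r * q) -> 0 <= q -> 0 <= w -> tau w <= w * q.
Proof.
  intros H Hq Hw. apply Rnot_lt_le. intros Hlt.
  set (e := tau w - w*q).
  assert (He : 0 < e) by (unfold e; lra).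
  set (r := w + e / (q + 1)).
  assert (Hr : w < r) by (unfold r; assert (0 < e/(q+1)) by (apply Rdiv_lt_0_compat; lra); lra).
  pose proof (H r Hr).
  assert (r * q < tau w).
  { unfold r. replace ((w + e/(q+1)) * q) with (w*q + e * (q/(q+1))) by (field; lra).
    assert (q/(q+1) < 1).
    { apply Rmult_lt_reg_r with (q+1). lra. unfold Rdiv. rewrite Rmult_assoc, Rinv_l by lra. lra. }
    assert (e * (q/(q+1)) < e) by (rewrite <- (Rmult_1_r e) at 2; apply Rmult_lt_compat_l; lra).
    unfold e in *. lra. }
  lra.
Qed.

Lemma Rpower_exp u g : Rpower (exp u) g = exp (g * u).
Proof. unfold Rpower. rewrite ln_exp. reflexivity. Qed.

Theorem proposition46
  (sigma gbar cinf R1 L m a : R) (tau : R -> R -> R)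
  (Hsigma : 0 < sigma) (Hgbar : 0 < gbar) (Hcinf : 0 <= cinf)
  (HR1 : 0 <= R1) (HL : 0 <= L) (Hm : 0 < m) (Ha : 0 < a)
  (Htau : forall gamma, 0 < gamma <= gbar ->
     (forall r, 0 <= r -> 0 <= tau gamma r)
     /\ (forall r s, 0 <= r -> r <= s -> tau gamma r <= tau gamma s)
     /\ tau gamma 0 = 0
     /\ (forall r, 0 < r -> tau gamma r / r <= 1 + gamma * L)
     /\ (forall r, R1 < r -> tau gamma r / r <= 1 - gamma * m)) :
  forall w gamma, 0 <= w -> 0 < gamma <= gbar1 sigma gbar cinf R1 m a ->
    Qker sigma cinf tau gamma (Wstar a) w
    <= Rpower (lam sigma cinf R1 m a) gamma * Wstar a w
         * indic (Rle_dec (Ra sigma gbar cinf R1 m a) w)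
       + Rpower (Ba sigma gbar cinf R1 L m a) gamma * Wstar a w
         * indic (Rlt_dec w (Ra sigma gbar cinf R1 m a))
       + gamma * Da sigma gbar cinf R1 L m a
         * indic (Rlt_dec w (Ra sigma gbar cinf R1 m a)).
Proof.
  intros w gamma Hw [Hg0 Hg1].
  assert (Hgg : gamma <= gbar).
  { unfold gbar1 in Hg1. pose proof (Rmin_l (Rmin gbar (/ - ln (lam sigma cinf R1 m a))) (/ (4 * sigma ^ 2))).
    pose proof (Rmin_l gbar (/ - ln (lam sigma cinf R1 m a))). lra. }
  destruct (Htau gamma (conj Hg0 Hgg)) as [Tpos [Tmono [T0 [TL Tm]]]].
  set (x := tau gamma w + gamma * cinf).
  assert (Hx : 0 <= x) by (unfold x; pose proof (Tpos w Hw); nra).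
  assert (HQ : Qker sigma cinf tau gamma (Wstar a) w =
     int_R (fun g => Wstar a (x - 2*sigma*sqrt gamma*g) * (1 - pbar sigma gamma x g) * phi g)).
  { unfold Qker. fold x. unfold Wstar at 1. rewrite Rmult_0_r, exp_0. ring. }
  rewrite HQ.
  eapply Rle_trans. apply key; auto.
  set (K := a * x + 2 * a * a * (sigma ^ 2 * gamma)).
  set (Rt := Rtilde sigma cinf R1 m a).
  assert (Rt1 : 1 <= Rt /\ R1 <= Rt /\ (4 * a * sigma ^ 2 + 2 * cinf) / m <= Rt).
  { unfold Rt, Rtilde.
    pose proof (Rmax_l (Rmax (Rmax 1 R1) ((4 * a * sigma ^ 2 + 2 * cinf) / m)) (16 * sigma ^ 2 * a / m)).
    pose proof (Rmax_l (Rmax 1 R1) ((4 * a * sigma ^ 2 + 2 * cinf) / m)).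
    pose proof (Rmax_r (Rmax 1 R1) ((4 * a * sigma ^ 2 + 2 * cinf) / m)).
    pose proof (Rmax_l 1 R1). pose proof (Rmax_r 1 R1). repeat split; lra. }
  destruct Rt1 as [Rt1 [Rt2 Rt3]].
  assert (HmRt : 4 * a * sigma ^ 2 + 2 * cinf <= m * Rt).
  { apply Rmult_le_compat_l with (r := m) in Rt3; [|lra].
    replace (m * ((4 * a * sigma ^ 2 + 2 * cinf) / m)) with (4 * a * sigma ^ 2 + 2 * cinf) in Rt3 by (field; lra).
    exact Rt3. }
  set (Rr := Ra sigma gbar cinf R1 m a).
  assert (HRr : Rt <= Rr) by (unfold Rr, Ra; cbv zeta; apply Rmax_l).
  assert (Hs2 : 0 < sigma ^ 2) by (apply pow_lt; lra).
  unfold indic.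
  destruct (Rle_dec Rr w) as [Hc|Hc]; destruct (Rlt_dec w Rr) as [Hc'|Hc']; try lra.
  -
    set (q := 1 - gamma * m).
    assert (Htq : forall r, R1 < r -> tau gamma r <= r * q).
    { intros r Hr. pose proof (Tm r Hr). fold q in H.
      apply Rmult_le_compat_r with (r := r) in H; [|lra].
      unfold Rdiv in H. rewrite Rmult_assoc, Rinv_l in H by lra. lra. }
    assert (Hq : 0 <= q).
    { pose proof (Htq (R1 + 1) ltac:(lra)). pose proof (Tpos (R1 + 1) ltac:(lra)). nra. }
    assert (Htw : tau gamma w <= w * q).
    { apply tau_lim; auto. intros r Hr. apply Rle_trans with (tau gamma r). apply Tmono; lra. apply Htq. lra. }
    assert (HK : K <= a * w - gamma * (a * m * Rt / 8)).
    { unfold K, x. unfold q in Htw.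
      assert (m * Rt <= m * w) by (apply Rmult_le_compat_l; lra).
      assert (a * (tau gamma w + gamma * cinf) <= a * (w * (1 - gamma * m) + gamma * cinf)) by (apply Rmult_le_compat_l; lra).
      assert (gamma * (4 * a * sigma ^ 2 + 2 * cinf) <= gamma * (m * w)) by (apply Rmult_le_compat_l; lra).
      assert (gamma * (m * Rt) <= gamma * (m * w)) by (apply Rmult_le_compat_l; lra).
      assert (a * (gamma * (4 * a * sigma ^ 2 + 2 * cinf)) <= a * (gamma * (m * w))) by (apply Rmult_le_compat_l; lra).
      assert (a * (gamma * (m * Rt)) <= a * (gamma * (m * w))) by (apply Rmult_le_compat_l; lra).
      assert (0 <= a * (gamma * (m * Rt))) by (repeat apply Rmult_le_pos; lra).
      lra. }
    unfold lam. fold Rt. rewrite Rpower_exp. unfold Wstar.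
    set (mu := a * m * Rt / 8) in *.
    replace (gamma * (- a * m * Rt / 8)) with (- (gamma * mu)) by (unfold mu; field).
    pose proof (exp_le _ _ HK).
    replace (a * w - gamma * mu) with (a * w + - (gamma * mu)) in H by ring.
    rewrite exp_plus in H.
    assert (exp (- (gamma * mu)) <= 1).
    { rewrite <- exp_0. apply exp_le. assert (0 <= mu) by (unfold mu; nra). nra. }
    pose proof (exp_pos (a*w)). pose proof (exp_pos (- (gamma * mu))).
    nra.
  -
    assert (Htw : tau gamma w <= w * (1 + gamma * L)).
    { destruct (Req_dec w 0) as [->|Hw0]. rewrite T0. lra.
      pose proof (TL w ltac:(lra)).
      apply Rmult_le_compat_r with (r := w) in H; [|lra].
      unfold Rdiv in H. rewrite Rmult_assoc, Rinv_l in H by lra. lra. }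
    set (kap := a * (cinf + 2 * a * sigma ^ 2 + L * Rr)).
    assert (Hkap : 0 <= kap).
    { unfold kap. assert (0 <= L * Rr) by (apply Rmult_le_pos; lra). nra. }
    assert (HK : K <= a * w + gamma * kap).
    { unfold K, x, kap.
      assert (a * (tau gamma w + gamma * cinf) <= a * (w * (1 + gamma * L) + gamma * cinf)) by (apply Rmult_le_compat_l; lra).
      assert (L * w <= L * Rr) by (apply Rmult_le_compat_l; lra).
      assert (gamma * (a * (L * w)) <= gamma * (a * (L * Rr))) by (apply Rmult_le_compat_l; [lra| apply Rmult_le_compat_l; lra]).
      nra. }
    unfold Ba. fold Rr. fold kap. rewrite Rpower_exp. unfold Wstar at 1 2.
    pose proof (exp_le _ _ HK). rewrite exp_plus in H.
    assert (E1 : exp (gamma * kap) - 1 <= gamma * kap * exp (gamma * kap)).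
    { pose proof (exp_ge1 (- (gamma * kap))). pose proof (exp_pos (gamma * kap)).
      rewrite exp_Ropp in H0.
      apply Rmult_le_compat_r with (r := exp (gamma * kap)) in H0; [|lra].
      rewrite Rinv_l in H0 by lra. nra. }
    assert (E2 : gamma * kap * exp (gamma * kap) <= gamma * (kap * exp (gbar * kap))).
    { assert (exp (gamma * kap) <= exp (gbar * kap)) by (apply exp_le; nra).
      assert (0 <= gamma * kap) by nra. nra. }
    assert (E3 : kap * exp (gbar * kap) <= Da sigma gbar cinf R1 L m a).
    { unfold Da. fold Rr. cbv zeta.
      replace (a * (cinf + 2 * a * sigma ^ 2 + L * Rr) * exp (a * gbar * (cinf + 2 * a * sigma ^ 2 + L * Rr)))
        with (kap * exp (gbar * kap)) by (unfold kap; f_equal; f_equal; ring).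
      assert (0 <= 2 * sigma ^ 2 * / sqrt (2 * PI) * a * exp ((a + 2 * sigma * sqrt gbar * a) ^ 2 / 2)).
      { pose proof (exp_pos ((a + 2 * sigma * sqrt gbar * a) ^ 2 / 2)).
        assert (0 < / sqrt (2 * PI)) by (apply Rinv_0_lt_compat, sqrt_lt_R0; pose proof PI_RGT_0; lra).
        repeat apply Rmult_le_pos; lra. }
      assert (0 <= 2 * sigma ^ 2 * a ^ 2 * Rpower (lam sigma cinf R1 m a) (2 * gbar) * Wstar a Rr).
      { assert (0 < Rpower (lam sigma cinf R1 m a) (2 * gbar)) by (unfold Rpower; apply exp_pos).
        assert (0 <= Wstar a Rr).
        { unfold Wstar. pose proof (exp_ge1 (a * Rr)). assert (0 <= a * Rr) by nra. lra. }
        assert (0 < a ^ 2) by (apply pow_lt; lra).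
        repeat apply Rmult_le_pos; lra. }
      lra. }
    pose proof (exp_pos (gamma * kap)). pose proof (exp_pos (a * w)).
    assert (gamma * (kap * exp (gbar * kap)) <= gamma * Da sigma gbar cinf R1 L m a) by (apply Rmult_le_compat_l; lra).
    nra.
Qed.

Print Assumptions proposition46.
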